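(* Let $S$ be a subspace of $\mathbb{R}^n$ and $\mathcal{M}_S=\{A\in\mathbb{R}^{n\times n}: A=A^\intercal,\ \mathrm{range}(A)=S,\ A\succeq0\}$. Then $A\mapsto\log\mathrm{Det}(A)$ is concave on any convex subset of $\mathcal{M}_S$.
   Context: For $A\in\mathbb{R}^{n\times n}$ the pseudo-determinant is $\mathrm{Det}(A)=\lim_{\epsilon\to0}\det(A+\epsilon I)/\epsilon^{n-\mathrm{rank}(A)}$; $\mathrm{range}(A)$ is the column space of $A$. *)

(* Defs.v *)
From HB Require Import structures.
From mathcomp Require Import all_boot all_order all_algebra.
From mathcomp Require Import all_classical all_reals all_analysis.
Set Implicit Arguments. Unset Strict Implicit. Unset Printing Implicit Defensive.
Import Order.TTheory GRing.Theory Num.Theory.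
Import numFieldNormedType.Exports.
Local Open Scope classical_set_scope.
Local Open Scope ring_scope.

Definition pdet (R : realType) (n : nat) (A : 'M[R]_n) : R :=
  lim ((fun eps : R => \det (A + eps%:M) / eps ^+ (n - \rank A)) @ 0^').

(* Positive semidefinite (for a matrix we also separately require symmetry). *)
Definition psd (R : realType) (n : nat) (A : 'M[R]_n) : Prop :=
  forall x : 'cV[R]_n, 0 <= (x^T *m A *m x) 0 0.

(* range(A) = column space of A = row space of A^T (mxalgebra row spaces).
   A subspace S of R^n is represented by a matrix whose row space is S. *)
Definition range_eq (R : realType) (n : nat) (A S : 'M[R]_n) : Prop :=
  (A^T == S)%MS.

Definition MS (R : realType) (n : nat) (S : 'M[R]_n) : set 'M[R]_n :=
  [set A | A = A^T /\ range_eq A S /\ psd A].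

Definition convex_mxset (R : realType) (n : nat) (C : set 'M[R]_n) : Prop :=
  forall A B, C A -> C B -> forall t : R, 0 <= t <= 1 ->
    C (t *: A + (1 - t) *: B).

Definition concave_on (R : realType) (n : nat) (C : set 'M[R]_n)
  (f : 'M[R]_n -> R) : Prop :=
  forall A B, C A -> C B -> forall t : R, 0 <= t <= 1 ->
    t * f A + (1 - t) * f B <= f (t *: A + (1 - t) *: B).

(* Main.v *)
Require Import Defs.
From HB Require Import structures.
From mathcomp Require Import all_boot all_order all_algebra.
From mathcomp Require Import all_classical all_reals all_analysis.
From mathcomp Require Import ring lra.
Import Order.TTheory GRing.Theory Num.Theory.
Import numFieldNormedType.Exports.
Local Open Scope classical_set_scope.
Local Open Scope ring_scope.
Set Implicit Arguments. Unset Strict Implicit. Unset Printing Implicit Defensive.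


Section Core.
Variable R : realType.

Definition qf n (X : 'M[R]_n) (x : 'cV[R]_n) : R := (x^T *m X *m x) 0 0.
Definition pd n (X : 'M[R]_n) := forall x, x != 0 -> 0 < qf X x.

Lemma qfD n (X Y : 'M[R]_n) x : qf (X + Y) x = qf X x + qf Y x.
Proof. by rewrite /qf mulmxDr mulmxDl mxE. Qed.

Lemma qfZ n (X : 'M[R]_n) a x : qf (a *: X) x = a * qf X x.
Proof. by rewrite /qf -scalemxAr -scalemxAl mxE. Qed.

Lemma qfN n (X : 'M[R]_n) x : qf (- X) x = - qf X x.
Proof. by rewrite -scaleN1r qfZ mulN1r. Qed.

Lemma qfB n (X Y : 'M[R]_n) x : qf (X - Y) x = qf X x - qf Y x.
Proof. by rewrite qfD qfN. Qed.

Definition aa r (X : 'M[R]_(1 + r)) : R := ulsubmx X 0 0.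
Definition cc r (X : 'M[R]_(1 + r)) (x : 'cV[R]_r) : R := (ursubmx X *m x) 0 0.
Definition schur r (X : 'M[R]_(1 + r)) : 'M[R]_r :=
  drsubmx X - (aa X)^-1 *: (dlsubmx X *m ursubmx X).

Lemma mx11E (A : 'M[R]_(1,1)) : A = (A 0 0)%:M.
Proof. by apply/matrixP => i j; rewrite !ord1 !mxE. Qed.

Lemma m11 m (u : 'M[R]_(1, m)) (v : 'M[R]_(m, 1)) (w : 'M[R]_(1,1)) :
  (u *m v *m w) 0 0 = (u *m v) 0 0 * w 0 0.
Proof. by rewrite mxE big_ord1. Qed.

Lemma m11' m (u : 'M[R]_(1, 1)) (v : 'M[R]_(1, m)) (w : 'M[R]_(m,1)) :
  (u *m v *m w) 0 0 = u 0 0 * (v *m w) 0 0.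
Proof. by rewrite -mulmxA mxE big_ord1. Qed.

Lemma addE m n (A B : 'M[R]_(m,n)) i j : (A + B) i j = A i j + B i j.
Proof. by rewrite mxE. Qed.

Lemma qf_split r (X : 'M[R]_(1 + r)) s x : X^T = X ->
  qf X (col_mx s x) = aa X * (s 0 0) ^+ 2 + 2 * s 0 0 * cc X x + qf (drsubmx X) x.
Proof.
move=> sX.
have hdl : (dlsubmx X)^T = ursubmx X by rewrite trmx_dlsub sX.
rewrite /qf tr_col_mx -{1}(submxK X) mul_row_block mul_row_col !mulmxDl.
rewrite !addE m11 (m11 x^T) (m11' s^T).
have -> : (x^T *m dlsubmx X) 0 0 = cc X x.
  by rewrite /cc -hdl -[x^T *m _]trmxK trmx_mul trmxK mxE.
rewrite /aa /cc mxE big_ord1 !mxE; ring.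
Qed.

Lemma xdl r (X : 'M[R]_(1 + r)) x : X^T = X -> (x^T *m dlsubmx X) 0 0 = cc X x.
Proof.
move=> sX; have hdl : (dlsubmx X)^T = ursubmx X by rewrite trmx_dlsub sX.
by rewrite /cc -hdl -[x^T *m _]trmxK trmx_mul trmxK mxE.
Qed.

Lemma qf_schur r (X : 'M[R]_(1 + r)) x : X^T = X ->
  qf (schur X) x = qf (drsubmx X) x - (aa X)^-1 * cc X x ^+ 2.
Proof.
move=> sX; rewrite /schur qfB qfZ; congr (_ - _ * _).
by rewrite /qf !mulmxA m11' xdl // /cc expr2.
Qed.

Lemma sym_schur r (X : 'M[R]_(1 + r)) : X^T = X -> (schur X)^T = schur X.
Proof.
move=> sX; rewrite /schur raddfB /= linearZ /= trmx_mul trmx_ursub trmx_dlsub.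
by rewrite trmx_drsub sX.
Qed.

Lemma det_schur r (X : 'M[R]_(1 + r)) : aa X != 0 -> \det X = aa X * \det (schur X).
Proof.
move=> a0.
pose L : 'M[R]_(1 + r) := block_mx 1%:M 0 (- (aa X)^-1 *: dlsubmx X) 1%:M.
have hL : \det L = 1 by rewrite det_lblock !det1 mulr1.
have hLX : L *m X = block_mx (ulsubmx X) (ursubmx X) 0 (schur X).
  rewrite -[X in L *m X](submxK X) mulmx_block !mul1mx !mul0mx !addr0 ?add0r.
  congr block_mx; last by rewrite /schur -scaleNr -scalemxAl addrC.
  rewrite [ulsubmx X]mx11E -/(aa X) mul_mx_scalar scalerA mulrN mulfV //.
  by rewrite scaleN1r addNr.
have := det_mulmx L X; rewrite hL mul1r hLX det_ublock det_mx11 => <-.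
by [].
Qed.

Lemma qf0 n (X : 'M[R]_n) : qf X 0 = 0.
Proof. by rewrite /qf mulmx0 mxE. Qed.

Lemma cc0 r (X : 'M[R]_(1 + r)) : cc X 0 = 0.
Proof. by rewrite /cc mulmx0 mxE. Qed.

Lemma qf_e r (X : 'M[R]_(1 + r)) : X^T = X -> qf X (col_mx 1 0) = aa X.
Proof. by move=> sX; rewrite qf_split // cc0 qf0 mxE /= expr1n; ring. Qed.

Lemma col_neq0 r (s : 'cV[R]_1) (x : 'cV[R]_r) : x != 0 -> col_mx s x != 0.
Proof. by move=> x0; rewrite col_mx_eq0 negb_and x0 orbT. Qed.

Lemma pd_aa r (X : 'M[R]_(1 + r)) : X^T = X -> pd X -> 0 < aa X.
Proof.
move=> sX pX; rewrite -qf_e //; apply: pX.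
by rewrite col_mx_eq0 negb_and oner_eq0.
Qed.

Lemma qf_ge_schur r (X : 'M[R]_(1 + r)) s x : X^T = X -> 0 < aa X ->
  qf (schur X) x <= qf X (col_mx s x).
Proof.
move=> sX a0; rewrite qf_split // qf_schur //.
set a := aa X; set c := cc X x; set q := qf _ x; set t := s 0 0.
have e : a * t ^+ 2 + 2 * t * c + q - (q - a^-1 * c ^+ 2) = a^-1 * (a * t + c) ^+ 2.
  by field; rewrite gt_eqF.
rewrite -subr_ge0 e; apply: mulr_ge0; last exact: sqr_ge0.
by rewrite invr_ge0 ltW.
Qed.

Lemma qf_eq_schur r (X : 'M[R]_(1 + r)) x : X^T = X -> aa X != 0 ->
  qf X (col_mx ((- cc X x / aa X)%:M) x) = qf (schur X) x.
Proof.
move=> sX a0; rewrite qf_split // qf_schur // mxE /=.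
by field.
Qed.

Lemma pd_schur r (X : 'M[R]_(1 + r)) : X^T = X -> pd X -> pd (schur X).
Proof.
move=> sX pX x x0; rewrite -qf_eq_schur //; last by rewrite gt_eqF // pd_aa.
by apply: pX; apply: col_neq0.
Qed.

Lemma det_pd r (X : 'M[R]_r) : X^T = X -> pd X -> 0 < \det X.
Proof.
elim: r X => [|r IH] X sX pX; first by rewrite det_mx00.
have a0 := pd_aa sX pX.
rewrite (@det_schur r X) ?gt_eqF //.
by apply: mulr_gt0 => //; apply: IH; [apply: sym_schur | apply: pd_schur].
Qed.

Lemma det_mono r (X Y : 'M[R]_r) : X^T = X -> Y^T = Y -> pd Y ->
  (forall x, qf Y x <= qf X x) -> \det Y <= \det X.
Proof.
elim: r X Y => [|r IH] X Y sX sY pY le; first by rewrite !det_mx00.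
have pX : pd X by move=> x x0; apply: lt_le_trans (pY x x0) (le x).
have aY := pd_aa sY pY; have aX := pd_aa sX pX.
have hale : aa Y <= aa X by rewrite -(qf_e sX) -(qf_e sY).
rewrite (@det_schur r X) ?gt_eqF // (@det_schur r Y) ?gt_eqF //.
have dS: \det (schur Y) <= \det (schur X).
  apply: IH; [exact: sym_schur|exact: sym_schur|exact: pd_schur|].
  move=> x; rewrite -(@qf_eq_schur r X x) // ?gt_eqF //.
  apply: le_trans (le _); exact: qf_ge_schur.
have dY := det_pd (sym_schur sY) (pd_schur sY pY).
by apply: ler_pM => //; apply: ltW.
Qed.

Lemma sym_comb n (X Y : 'M[R]_n) t : X^T = X -> Y^T = Y ->
  (t *: X + (1 - t) *: Y)^T = t *: X + (1 - t) *: Y.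
Proof. by move=> sX sY; rewrite raddfD /= !linearZ /= sX sY. Qed.

Lemma qf_comb n (X Y : 'M[R]_n) t x :
  qf (t *: X + (1 - t) *: Y) x = t * qf X x + (1 - t) * qf Y x.
Proof. by rewrite qfD !qfZ. Qed.

Lemma pd_comb n (X Y : 'M[R]_n) t : pd X -> pd Y -> 0 <= t <= 1 ->
  pd (t *: X + (1 - t) *: Y).
Proof.
move=> pX pY /andP[t0 t1] x x0; rewrite qf_comb.
have := pX x x0; have := pY x x0; nra.
Qed.

Lemma ln_conc (a b t : R) : 0 < a -> 0 < b -> 0 <= t <= 1 ->
  t * ln a + (1 - t) * ln b <= ln (t * a + (1 - t) * b).
Proof.
move=> a0 b0 /andP[t0 t1].
set m := t * a + (1 - t) * b.
have m0 : 0 < m by rewrite /m; nra.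
have key z : 0 < z -> ln z <= ln m + (z / m - 1).
  move=> z0; have zm : 0 < z / m by apply: divr_gt0.
  have -> : ln z = ln m + ln (z / m).
    by rewrite -lnM ?posrE // mulrC divfK ?gt_eqF.
  rewrite lerD2l.
  have := @le_ln1Dx R (z / m - 1); rewrite [1 + _]addrC subrK; apply; lra.
have huv : t * (a / m) + (1 - t) * (b / m) = 1.
  by rewrite /m; field; rewrite -/m gt_eqF.
apply: le_trans (_ : t * (ln m + (a / m - 1)) + (1 - t) * (ln m + (b / m - 1)) <= _).
  by apply: lerD; apply: ler_wpM2l; rewrite ?subr_ge0 //; apply: key.
have -> : t * (ln m + (a / m - 1)) + (1 - t) * (ln m + (b / m - 1)) =
  ln m + (t * (a / m) + (1 - t) * (b / m)) - 1 by ring.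
by rewrite huv addrK.
Qed.

Lemma lndet_concave r (X Y : 'M[R]_r) t : X^T = X -> Y^T = Y -> pd X -> pd Y ->
  0 <= t <= 1 ->
  t * ln (\det X) + (1 - t) * ln (\det Y) <= ln (\det (t *: X + (1 - t) *: Y)).
Proof.
elim: r X Y => [|r IH] X Y sX sY pX pY t01.
  by rewrite !det_mx00 ln1 !mulr0 addr0.
have /andP[t0 t1] := t01.
set Z := t *: X + (1 - t) *: Y.
have sZ : Z^T = Z by apply: sym_comb.
have pZ : pd Z by apply: pd_comb.
have aX := pd_aa sX pX; have aY := pd_aa sY pY; have aZ := pd_aa sZ pZ.
have haZ : aa Z = t * aa X + (1 - t) * aa Y.
  by rewrite -(qf_e sX) -(qf_e sY) -(qf_e sZ) /Z qf_comb.
set W := t *: schur X + (1 - t) *: schur Y.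
have sSX := sym_schur sX; have sSY := sym_schur sY; have sSZ := sym_schur sZ.
have pSX := pd_schur sX pX; have pSY := pd_schur sY pY; have pSZ := pd_schur sZ pZ.
have sW : W^T = W by apply: sym_comb.
have pW : pd W by apply: pd_comb.
have dW : \det W <= \det (schur Z).
  apply: det_mono => // x; rewrite /W qf_comb.
  rewrite -(@qf_eq_schur r Z x) ?gt_eqF // {2}/Z qf_comb.
  by apply: lerD; apply: ler_wpM2l; rewrite ?subr_ge0 //; apply: qf_ge_schur.
have IHW := IH _ _ sSX sSY pSX pSY t01.
have lW : ln (\det W) <= ln (\det (schur Z)).
  by rewrite ler_ln ?posrE // ?(det_pd sW pW) ?(det_pd sSZ pSZ).
have la := ln_conc aX aY t01.
rewrite (@det_schur r X) ?gt_eqF // (@det_schur r Y) ?gt_eqF //.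
rewrite (@det_schur r Z) ?gt_eqF //.
rewrite !lnM ?posrE ?(det_pd sSX pSX) ?(det_pd sSY pSY) ?(det_pd sSZ pSZ) //.
rewrite haZ.
rewrite -/W in IHW.
lra.
Qed.

Lemma scaleE m n a (A : 'M[R]_(m,n)) i j : (a *: A) i j = a * A i j.
Proof. by rewrite mxE. Qed.

Lemma tr11 (A : 'M[R]_1) : A^T 0 0 = A 0 0.
Proof. by rewrite mxE. Qed.

Lemma sqn n (v : 'cV[R]_n) : (v^T *m v) 0 0 = \sum_i v i 0 ^+ 2.
Proof. by rewrite mxE; apply: eq_bigr => i _; rewrite mxE expr2. Qed.

Lemma sqn_ge0 n (v : 'cV[R]_n) : 0 <= (v^T *m v) 0 0.
Proof. by rewrite sqn; apply: sumr_ge0 => i _; apply: sqr_ge0. Qed.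

Lemma sqn_eq0 n (v : 'cV[R]_n) : (v^T *m v) 0 0 = 0 -> v = 0.
Proof.
rewrite sqn => h; apply/matrixP => i j; rewrite ord1 mxE.
have := psumr_eq0P (fun i _ => sqr_ge0 (v i 0)) h (isT : true) (i := i).
by move/eqP; rewrite sqrf_eq0 => /eqP.
Qed.

Lemma psd_ker n (X : 'M[R]_n) x : X^T = X -> (forall y, 0 <= qf X y) ->
  qf X x = 0 -> X *m x = 0.
Proof.
move=> sX pX q0.
set v := X *m x; set c : R := (v^T *m v) 0 0; set d := qf X v.
have hvx : (v^T *m X *m x) 0 0 = c by rewrite -mulmxA.
have hxv : (x^T *m X *m v) 0 0 = c.
  by rewrite /c /v trmx_mul sX mulmxA.
have expand s : qf X (x + s *: v) = qf X x + 2 * s * c + s ^+ 2 * d.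
  rewrite /qf; have -> : (x + s *: v)^T = x^T + s *: v^T by rewrite raddfD /= linearZ.
  rewrite !mulmxDl !mulmxDr -!scalemxAl -!scalemxAr.
  rewrite !addE !scaleE hvx hxv -/(qf X x) -[(v^T *m X *m v) 0 0]/d; ring.
have c0 : 0 <= c by apply: sqn_ge0.
have d0 : 0 <= d by apply: pX.
set s := - c / (d + 1).
have hw : s * (d + 1) = - c by rewrite /s; field; rewrite gt_eqF // ltr_wpDl.
have h := pX (x + s *: v); rewrite expand q0 add0r in h.
have h2 := mulr_ge0 h (sqr_ge0 (d + 1)).
have E : (2 * s * c + s ^+ 2 * d) * (d + 1) ^+ 2 =
  2 * c * (s * (d + 1)) * (d + 1) + (s * (d + 1)) ^+ 2 * d by ring.
rewrite E hw in h2.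
have cle : c <= 0 by nra.
apply: sqn_eq0; apply/eqP; rewrite eq_le cle; exact: c0.
Qed.

Lemma sylvester n r (U : 'M[R]_(n, r)) (V : 'M[R]_(r, n)) e : e != 0 -> (r <= n)%N ->
  \det (U *m V + e%:M) = e ^+ (n - r) * \det (V *m U + e%:M).
Proof.
move=> e0 rn.
pose K : 'M[R]_(r + n) := block_mx 1%:M V (- U) e%:M.
have K1 : K = block_mx 1%:M 0 (- U) 1%:M *m block_mx 1%:M V 0 (U *m V + e%:M).
  rewrite mulmx_block ?mul1mx ?mul0mx ?mulmx0 ?addr0 ?mulmx1 ?add0r.
  by rewrite mulNmx addrA addNr add0r.
have K2 : K = block_mx (1%:M + e^-1 *: (V *m U)) V 0 e%:M *m
              block_mx 1%:M 0 (- e^-1 *: U) 1%:M.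
  rewrite mulmx_block ?mulmx1 ?mulmx0 ?mul0mx ?add0r ?addr0.
  rewrite mul_scalar_mx scalerA mulrN mulfV // scaleN1r.
  by rewrite scaleNr mulmxN -scalemxAr addrK.
have d1 : \det K = \det (U *m V + e%:M).
  by rewrite K1 det_mulmx det_lblock det_ublock !det1 !mul1r.
have d2 : \det K = \det (1%:M + e^-1 *: (V *m U)) * e ^+ n.
  by rewrite K2 det_mulmx det_ublock det_lblock !det1 det_scalar !mulr1.
have h3 : 1%:M + e^-1 *: (V *m U) = e^-1 *: (V *m U + e%:M).
  by rewrite scalerDr scale_scalar_mx mulVf // addrC.
have en : e ^+ n = e ^+ (n - r) * e ^+ r by rewrite -exprD subnK.
rewrite -d1 d2 h3 detZ en exprVn.
have er : e ^+ r != 0 by rewrite expf_neq0.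
by field.
Qed.
End Core.


Section Lim.
Variable R : realType.

Lemma det_eval m (N : 'M[R]_m) x : \det (N + x%:M) = (char_poly (- N)).[x].
Proof.
rewrite /char_poly -horner_evalE -det_map_mx; congr (determinant _).
apply/matrixP => i j; rewrite !mxE /=.
by rewrite horner_evalE !hornerE opprK addrC hornerMn hornerX.
Qed.

Lemma lim_det m (N : 'M[R]_m) (f : R -> R) :
  (forall e, e != 0 -> f e = \det (N + e%:M)) ->
  lim (f @ 0^')%classic = \det N.
Proof.
move=> hf.
have g0 : \det N = (char_poly (- N)).[0].
  by rewrite -det_eval (_ : (0 : R)%:M = 0) ?addr0 //; apply/matrixP=> i j; rewrite !mxE mul0rn.
rewrite g0; apply: cvg_lim => //.
have hc : (horner (char_poly (- N)) @ 0^' --> (char_poly (- N)).[0])%classic.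
  by apply/continuous_withinNx; apply: continuous_horner.
apply: cvg_trans hc; apply: near_eq_cvg.
near=> e.
have e0 : e != 0 by near: e; exact: nbhs_dnbhs_neq.
by rewrite hf // det_eval.
Unshelve. all: by end_near.
Qed.
End Lim.


Section Main.
Variables (R : realType) (n r : nat) (S : 'M[R]_n) (B : 'M[R]_(r, n)).
Hypothesis hBf : row_free B.
Hypothesis hBS : (B == S)%MS.
Definition GG : 'M[R]_r := B *m B^T.

Lemma GG_sym : GG^T = GG.
Proof. by rewrite /GG trmx_mul trmxK. Qed.

Lemma GG_pd : pd GG.
Proof.
move=> x x0; rewrite /qf /GG.
have -> : x^T *m (B *m B^T) *m x = (B^T *m x)^T *m (B^T *m x).
  by rewrite trmx_mul trmxK !mulmxA.
rewrite lt_def sqn_ge0 andbT; apply/eqP => /sqn_eq0 h.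
have hx : x^T *m B = 0 *m B.
  rewrite mul0mx; apply: trmx_inj; rewrite trmx_mul trmxK h.
  by apply/matrixP=> i j; rewrite !mxE.
have := row_free_inj hBf hx => hx0.
move/eqP: x0; apply; rewrite -[x]trmxK hx0.
by apply/matrixP=> i j; rewrite !mxE.

Qed.

Lemma GG_unit : GG \in unitmx.
Proof.
rewrite unitmxE unitfE gt_eqF //; apply: det_pd; [exact: GG_sym | exact: GG_pd].
Qed.

Definition PP : 'M[R]_(n, r) := B^T *m invmx GG.
Definition Mof (A : 'M[R]_n) : 'M[R]_r := PP^T *m A *m PP.

Lemma BP : B *m PP = 1%:M.
Proof. by rewrite /PP mulmxA -/GG mulmxV // GG_unit. Qed.

Section OneA.
Variable A : 'M[R]_n.
Hypothesis sA : A = A^T.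
Hypothesis rA : range_eq A S.
Hypothesis pA : psd A.

Lemma rankA : \rank A = r.
Proof.
by rewrite -mxrank_tr (eqmx_rank rA) -(eqmx_rank hBS); apply/eqP.
Qed.

Lemma AleB : (A <= B)%MS.
Proof.
case/andP: hBS => _ h; apply: submx_trans h.
by rewrite -[A]trmxK -sA; case/andP: rA.
Qed.

Lemma APB : A *m PP *m B = A.
Proof.
rewrite -{1}(mulmxKpV AleB).
have e : A *m pinvmx B *m B *m PP = A *m pinvmx B *m (B *m PP) by rewrite mulmxA.
by rewrite e BP mulmx1; exact: mulmxKpV AleB.
Qed.

Lemma BMB : B^T *m Mof A *m B = A.
Proof.
have h : B^T *m PP^T *m A = A.
  by apply: trmx_inj; rewrite !trmx_mul !trmxK -sA mulmxA APB.
by rewrite /Mof !mulmxA h -(mulmxA A) -/PP APB.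
Qed.

Lemma Mof_sym : (Mof A)^T = Mof A.
Proof. by rewrite /Mof !trmx_mul !trmxK -sA !mulmxA. Qed.

Lemma Mof_qf x : qf (Mof A) x = qf A (PP *m x).
Proof. by rewrite /qf /Mof [(PP *m x)^T]trmx_mul !mulmxA. Qed.

Lemma rB : \rank B = r.
Proof. exact/eqP. Qed.

Lemma Mof_unit : Mof A \in unitmx.
Proof.
rewrite -row_free_unit /row_free; apply/eqP/anti_leq.
rewrite rank_leq_row /=.
have h1 := mxrankM_maxl (B^T *m Mof A) B; rewrite BMB rankA in h1.
exact: leq_trans h1 (mxrankM_maxr _ _).
Qed.

Lemma Mof_pd : pd (Mof A).
Proof.
move=> x x0; rewrite lt_def.
have pM : forall y, 0 <= qf (Mof A) y by move=> y; rewrite Mof_qf; apply: pA.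
rewrite pM andbT; apply/eqP => q0.
have := psd_ker Mof_sym pM q0 => hM.
move/eqP: x0; apply; by rewrite -(mulKmx Mof_unit x) hM mulmx0.
Qed.

Lemma r_le_n : (r <= n)%N.
Proof. by rewrite -rB rank_leq_col. Qed.

Lemma pdet_eq : pdet A = \det (Mof A) * \det GG.
Proof.
rewrite /pdet rankA -det_mulmx; apply: lim_det => e e0.
rewrite -{1}BMB -mulmxA sylvester // ?r_le_n //.
rewrite /GG mulmxA mulrC mulKf //; exact: expf_neq0.
Qed.
End OneA.

Lemma Mof_comb (A1 A2 : 'M[R]_n) t :
  Mof (t *: A1 + (1 - t) *: A2) = t *: Mof A1 + (1 - t) *: Mof A2.
Proof. by rewrite /Mof mulmxDr mulmxDl -!scalemxAr -!scalemxAl. Qed.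

End Main.

Unset Implicit Arguments.

Theorem lemma3 (R : realType) (n : nat) (S : 'M[R]_n) (C : set 'M[R]_n) :
  C `<=` MS S -> convex_mxset C ->
  concave_on C (fun A => ln (pdet A)).
Proof.
move=> hC cC A1 A2 C1 C2 t t01.
have C3 := cC _ _ C1 C2 t t01.
have [s1 [r1 p1]] := hC _ C1; have [s2 [r2 p2]] := hC _ C2.
have [s3 [r3 p3]] := hC _ C3.
pose B := row_base S.
have hBf : row_free B := row_base_free S.
have hBS : (B == S)%MS.
  by rewrite /B; apply/eqmxP; apply: (eq_row_base S).
rewrite /= (pdet_eq hBf hBS s1 r1) (pdet_eq hBf hBS s2 r2) (pdet_eq hBf hBS s3 r3).
have G0 : 0 < \det (GG B) by apply: det_pd; [exact: GG_sym | move=> x; apply: GG_pd].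
have pM1 : pd (Mof B A1) by move=> x; apply: (Mof_pd hBf hBS s1 r1 p1).
have pM2 : pd (Mof B A2) by move=> x; apply: (Mof_pd hBf hBS s2 r2 p2).
have pM3 : pd (Mof B (t *: A1 + (1 - t) *: A2)) by move=> x; apply: (Mof_pd hBf hBS s3 r3 p3).
have d1 := det_pd (Mof_sym B s1) pM1.
have d2 := det_pd (Mof_sym B s2) pM2.
have d3 := det_pd (Mof_sym B s3) pM3.
rewrite !lnM ?posrE //.
have := lndet_concave (Mof_sym B s1) (Mof_sym B s2) pM1 pM2 t01.
rewrite -Mof_comb.
lra.
Qed.
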